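(* Let $\{w^k\}$ be generated by Algorithm 2 (running infinitely) and suppose $\varepsilon^k\to0$. Then each accumulation point $\bar w$ of $\{w^k\}$ that is feasible for (P) and AM-regular is an M-stationary point of (P), i.e., there is $\lambda\in\mathbb Y$ with $0\in\nabla f(\bar w)+G'(\bar w)^*\lambda+\mathcal N^{\lim}_D(\bar w)$ and $\lambda\in\mathcal N_C(G(\bar w))$.
   Context: Standing setting: $\mathbb W,\mathbb Y$ Euclidean spaces; (P) is $\min f(w)$ s.t. $G(w)\in C$, $w\in D$, with $f\colon\mathbb W\to\mathbb R$, $G\colon\mathbb W\to\mathbb Y$ continuously differentiable, $C\subset\mathbb Y$ nonempty closed convex, $D\subset\mathbb W$ nonempty closed. $P_C$ is the Euclidean projection onto $C$, $d_C(y)=\|y-P_C(y)\|$, $\mathcal N_C$ the convex normal cone ($\varnothing$ outside $C$); $\mathcal N^{\lim}_D(\bar w):=\limsup_{w\to\bar w}\operatorname{cone}(w-\Pi_D(w))$ for $\bar w\in D$ ($\Pi_D$ multivalued projection, outer set limit), $\varnothing$ for $\bar w\notin D$. A feasible $\bar w$ is AM-regular if $\limsup_{w\to\bar w,\,z\to0}\mathcal M(w,z)\subset\mathcal M(\bar w,0)$ with $\mathcal M(w,z):=G'(w)^*\mathcal N_C(G(w)-z)+\mathcal N^{\lim}_D(w)$. Augmented Lagrangian $\mathcal L_\rho(w,\lambda):=f(w)+\frac\rho2 d_C^2(G(w)+\lambda/\rho)$; $V_\rho(w,u):=\|G(w)-P_C(G(w)+u/\rho)\|$. Algorithm 2: data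 $\rho_0>0$, $\beta>1$, $\eta\in(0,1)$, $w^0\in D$, a nonempty bounded set $U\subset\mathbb Y$. For $k=0,1,\dots$: choose $u^k\in U$; compute $w^{k+1}$ and $\varepsilon^{k+1}\in\mathbb W$ with $\varepsilon^{k+1}\in\nabla_w\mathcal L_{\rho_k}(w^{k+1},u^k)+\mathcal N^{\lim}_D(w^{k+1})$; set $\lambda^{k+1}:=\rho_k[G(w^{k+1})+u^k/\rho_k-P_C(G(w^{k+1})+u^k/\rho_k)]$; if $k=0$ or $V_{\rho_k}(w^{k+1},u^k)\le\eta V_{\rho_{k-1}}(w^k,u^{k-1})$ set $\rho_{k+1}:=\rho_k$, else $\rho_{k+1}:=\beta\rho_k$. *)

(* Defs.v *)
(* Euclidean spaces W = 'rV[R]_n, Y = 'rV[R]_m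
   with the standard inner product (topology = the library's one on matrices,
   which coincides with the Euclidean topology). *)
From HB Require Import structures.
From mathcomp Require Import all_boot all_order all_algebra.
From mathcomp Require Import all_classical all_reals all_analysis.
Set Implicit Arguments. Unset Strict Implicit. Unset Printing Implicit Defensive.
Import Order.TTheory GRing.Theory Num.Theory.
Import numFieldNormedType.Exports.
Local Open Scope classical_set_scope.
Local Open Scope ring_scope.

Section Defs.
Variable R : realType.

Definition dotv {n : nat} (u v : 'rV[R]_n) : R := \sum_(i < n) u 0 i * v 0 i.
Definition enorm {n : nat} (u : 'rV[R]_n) : R := Num.sqrt (dotv u u).

Definition convex_set_E {n : nat} (C : set 'rV[R]_n) : Prop :=
  forall x y t, C x -> C y -> 0 <= t -> t <= 1 -> C (t *: x + (1 - t) *: y).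

Definition bounded_E {n : nat} (U : set 'rV[R]_n) : Prop :=
  exists M : R, forall y, U y -> enorm y <= M.

Definition Proj {n : nat} (D : set 'rV[R]_n) (w : 'rV[R]_n) : set 'rV[R]_n :=
  [set p | D p /\ forall d, D d -> enorm (w - p) <= enorm (w - d)].

(* P_C : single-valued projection (unique for nonempty closed convex C) *)
Definition projC {n : nat} (C : set 'rV[R]_n) (y : 'rV[R]_n) : 'rV[R]_n :=
  xget y (Proj C y).

Definition distC {n : nat} (C : set 'rV[R]_n) (y : 'rV[R]_n) : R :=
  enorm (y - projC C y).

(* convex normal cone; empty outside C *)
Definition NC {n : nat} (C : set 'rV[R]_n) (y : 'rV[R]_n) : set 'rV[R]_n :=
  [set v | C y /\ forall c, C c -> dotv v (c - y) <= 0].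

Definition proxcone {n : nat} (D : set 'rV[R]_n) (w : 'rV[R]_n) : set 'rV[R]_n :=
  [set v | exists t p, 0 <= t /\ Proj D w p /\ v = t *: (w - p)].

(* limiting normal cone: outer limit of proxcone as w -> wbar; empty outside D *)
Definition Nlim {n : nat} (D : set 'rV[R]_n) (wb : 'rV[R]_n) : set 'rV[R]_n :=
  [set v | D wb /\ exists (ws vs : nat -> 'rV[R]_n),
     ws @ \oo --> wb /\ vs @ \oo --> v /\ forall k, proxcone D (ws k) (vs k)].

Definition is_grad {n : nat} (F : 'rV[R]_n -> R^o) (w g : 'rV[R]_n) : Prop :=
  differentiable F w /\ forall h, 'd F w h = dotv g h.

Definition is_jac {n m : nat} (G : 'rV[R]_n -> 'rV[R]_m) (w : 'rV[R]_n)
  (J : 'M[R]_(n, m)) : Prop :=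
  differentiable G w /\ forall h, 'd G w h = h *m J.

(* adjoint G'(w)^* lambda = lambda *m J^T, since <h *m J, l> = <h, l *m J^T> *)
Definition adjJ {n m : nat} (J : 'M[R]_(n, m)) (l : 'rV[R]_m) : 'rV[R]_n :=
  l *m J^T.

Definition Mset {n m : nat} (G : 'rV[R]_n -> 'rV[R]_m) (JG : 'rV[R]_n -> 'M[R]_(n, m))
  (C : set 'rV[R]_m) (D : set 'rV[R]_n) (w : 'rV[R]_n) (z : 'rV[R]_m) : set 'rV[R]_n :=
  [set v | exists l d, NC C (G w - z) l /\ Nlim D w d /\ v = adjJ (JG w) l + d].

Definition AM_regular {n m : nat} (G : 'rV[R]_n -> 'rV[R]_m) (JG : 'rV[R]_n -> 'M[R]_(n, m))
  (C : set 'rV[R]_m) (D : set 'rV[R]_n) (wb : 'rV[R]_n) : Prop :=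
  forall v, (exists (ws : nat -> 'rV[R]_n) (zs : nat -> 'rV[R]_m) (vs : nat -> 'rV[R]_n),
      ws @ \oo --> wb /\ zs @ \oo --> (0 : 'rV[R]_m) /\ vs @ \oo --> v /\
      forall k, Mset G JG C D (ws k) (zs k) (vs k)) ->
    Mset G JG C D wb 0 v.

Definition AugL {n m : nat} (f : 'rV[R]_n -> R) (G : 'rV[R]_n -> 'rV[R]_m)
  (C : set 'rV[R]_m) (rho : R) (w : 'rV[R]_n) (l : 'rV[R]_m) : R :=
  f w + rho / 2 * (distC C (G w + rho^-1 *: l)) ^+ 2.

Definition Vrho {n m : nat} (G : 'rV[R]_n -> 'rV[R]_m) (C : set 'rV[R]_m)
  (rho : R) (w : 'rV[R]_n) (u : 'rV[R]_m) : R :=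
  enorm (G w - projC C (G w + rho^-1 *: u)).

Definition Algorithm2 {n m : nat} (f : 'rV[R]_n -> R) (G : 'rV[R]_n -> 'rV[R]_m)
  (C : set 'rV[R]_m) (D : set 'rV[R]_n)
  (rho0 beta eta : R) (U : set 'rV[R]_m)
  (rho : nat -> R) (u : nat -> 'rV[R]_m) (w eps : nat -> 'rV[R]_n)
  (lam : nat -> 'rV[R]_m) : Prop :=
  [/\ 0 < rho0 /\ 1 < beta /\ 0 < eta /\ eta < 1, D (w 0%N),
      (exists y, U y) /\ bounded_E U, rho 0%N = rho0 &
      forall k : nat,
      [/\ U (u k),
          (exists g, is_grad (fun x => AugL f G C (rho k) x (u k)) (w k.+1) g /\
                    Nlim D (w k.+1) (eps k.+1 - g)),
          lam k.+1 = rho k *: (G (w k.+1) + (rho k)^-1 *: u k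
                               - projC C (G (w k.+1) + (rho k)^-1 *: u k)) &
          rho k.+1 = (if (k == 0%N) ||
                         (Vrho G C (rho k) (w k.+1) (u k)
                            <= eta * Vrho G C (rho k.-1) (w k) (u k.-1))
                      then rho k else beta * rho k)]].

Definition accumulation_point {n : nat} (w : nat -> 'rV[R]_n) (wb : 'rV[R]_n) : Prop :=
  exists phi : nat -> nat, (forall k, (phi k < phi k.+1)%N) /\
    (fun k => w (phi k)) @ \oo --> wb.

End Defs.

(* Main.v *)
Require Import Defs.
From HB Require Import structures.
From mathcomp Require Import all_boot all_order all_algebra.
From mathcomp Require Import all_classical all_reals all_analysis.
From mathcomp Require Import ring lra.
Set Implicit Arguments. Unset Strict Implicit. Unset Printing Implicit Defensive.
Import Order.TTheory GRing.Theory Num.Theory.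
Import numFieldNormedType.Exports.
Local Open Scope classical_set_scope.
Local Open Scope ring_scope.
Lemma dotvDl (R : realType) n (a b c : 'rV[R]_n) : dotv (a + b) c = dotv a c + dotv b c.
Proof. by rewrite /dotv -big_split; apply: eq_bigr => i _; rewrite !mxE mulrDl. Qed.
Lemma dotvC (R : realType) n (a b : 'rV[R]_n) : dotv a b = dotv b a.
Proof. by rewrite /dotv; apply: eq_bigr => i _; rewrite mulrC. Qed.
Lemma dotvDr (R : realType) n (a b c : 'rV[R]_n) : dotv c (a + b) = dotv c a + dotv c b.
Proof. by rewrite dotvC dotvDl !(dotvC c). Qed.
Lemma dotvZl (R : realType) n t (a b : 'rV[R]_n) : dotv (t *: a) b = t * dotv a b.
Proof. by rewrite /dotv mulr_sumr; apply: eq_bigr => i _; rewrite !mxE mulrA. Qed.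
Lemma dotvZr (R : realType) n t (a b : 'rV[R]_n) : dotv a (t *: b) = t * dotv a b.
Proof. by rewrite dotvC dotvZl dotvC. Qed.
Lemma dotvNl (R : realType) n (a b : 'rV[R]_n) : dotv (- a) b = - dotv a b.
Proof. by rewrite -scaleN1r dotvZl mulN1r. Qed.
Lemma dotvNr (R : realType) n (a b : 'rV[R]_n) : dotv a (- b) = - dotv a b.
Proof. by rewrite -scaleN1r dotvZr mulN1r. Qed.
Lemma dotvBl (R : realType) n (a b c : 'rV[R]_n) : dotv (a - b) c = dotv a c - dotv b c.
Proof. by rewrite dotvDl dotvNl. Qed.
Lemma dotvBr (R : realType) n (a b c : 'rV[R]_n) : dotv c (a - b) = dotv c a - dotv c b.
Proof. by rewrite dotvDr dotvNr. Qed.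
Lemma dotv0l (R : realType) n (a : 'rV[R]_n) : dotv 0 a = 0.
Proof. by rewrite /dotv big1 // => i _; rewrite mxE mul0r. Qed.
Lemma dotv_ge0 (R : realType) n (a : 'rV[R]_n) : 0 <= dotv a a.
Proof. by rewrite /dotv; apply: sumr_ge0 => i _; rewrite -expr2 sqr_ge0. Qed.
Lemma sqr_ge0_aux (R : realType) n (a : 'rV[R]_n) k : 0 <= a 0 k * a 0 k.
Proof. by rewrite -expr2 sqr_ge0. Qed.
Lemma dotv_eq0 (R : realType) n (a : 'rV[R]_n) : dotv a a = 0 -> a = 0.
Proof.
move=> h; apply/matrixP => i j; rewrite mxE (ord1 i).
move/psumr_eq0P: h => H.
have H' := H (fun k _ => sqr_ge0_aux a k) j isT.
by apply/eqP; rewrite -sqrf_eq0 expr2 H'.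
Qed.
Lemma enorm_sq (R : realType) n (a : 'rV[R]_n) : enorm a ^+ 2 = dotv a a.
Proof. by rewrite /enorm sqr_sqrtr // dotv_ge0. Qed.
Lemma enorm_ge0 (R : realType) n (a : 'rV[R]_n) : 0 <= enorm a.
Proof. exact: sqrtr_ge0. Qed.
Lemma enorm_le (R : realType) n (a b : 'rV[R]_n) : (enorm a <= enorm b) = (dotv a a <= dotv b b).
Proof. by rewrite /enorm ler_sqrt // dotv_ge0. Qed.
Lemma enormN (R : realType) n (a : 'rV[R]_n) : enorm (- a) = enorm a.
Proof. by rewrite /enorm dotvNl dotvNr opprK. Qed.
Lemma coord_le_enorm (R : realType) n (a : 'rV[R]_n) i : `|a 0 i| <= enorm a.
Proof.
rewrite -(ler_pXn2r (_ : 0 < 2)%N) ?nnegrE ?enorm_ge0 // enorm_sq real_normK ?num_real //.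
rewrite /dotv (bigD1 i) //= -expr2 lerDl; apply: sumr_ge0 => k _; rewrite -expr2 sqr_ge0 //.
Qed.
Lemma mxnorm_le_enorm (R : realType) n (a : 'rV[R]_n) : `|a| <= enorm a.
Proof.
rewrite (_ : `|a| = mx_norm a) // mx_normrE; apply: bigmax_le; first exact: enorm_ge0.
by move=> [i j] _ /=; rewrite (ord1 i); apply: coord_le_enorm.
Qed.
Lemma coord_le_mxnorm (R : realType) n (a : 'rV[R]_n) i : `|a 0 i| <= `|a|.
Proof.
rewrite (_ : `|a| = mx_norm a) // mx_normrE.
by apply/bigmax_geP; right; exists (ord0, i).
Qed.
Lemma enorm_le_mxnorm (R : realType) n (a : 'rV[R]_n) : enorm a <= n%:R * `|a|.
Proof.
rewrite -(ler_pXn2r (_ : 0 < 2)%N) ?nnegrE ?enorm_ge0 ?mulr_ge0 // enorm_sq.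
apply: (le_trans (y := \sum_(i < n) `|a|^+2)).
  apply: ler_sum => i _; rewrite -expr2 -real_normK ?num_real //.
  by rewrite lerXn2r ?nnegrE // coord_le_mxnorm.
rewrite sumr_const card_ord exprMn -[X in X <= _]mulr_natl ler_wpM2r ?sqr_ge0 //.
by rewrite -natrX ler_nat; case: n {a} => // k; rewrite expnS expn1 leq_pmulr.
Qed.

Lemma cvg_coord (R : realType) n T (F : set_system T) (FF : Filter F) (c : T -> 'rV[R]_n) (c0 : 'rV[R]_n) i :
  c @ F --> c0 -> (fun x => c x 0 i) @ F --> c0 0 i.
Proof. move=> cc; exact: (continuous_cvg _ (@coord_continuous R 1 n 0 i c0) cc). Qed.

Lemma cvg_dotv (R : realType) n T (F : set_system T) (FF : Filter F) (a b : T -> 'rV[R]_n) (a0 b0 : 'rV[R]_n) :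
  a @ F --> a0 -> b @ F --> b0 -> (fun x => dotv (a x) (b x)) @ F --> dotv a0 b0.
Proof.
move=> ca cb.
have H : forall s : seq 'I_n, (fun x => \sum_(i <- s) a x 0 i * b x 0 i) @ F --> \sum_(i <- s) a0 0 i * b0 0 i.
  elim => [|i s IH].
    under eq_fun do rewrite big_nil; rewrite big_nil; exact: cvg_cst.
  under eq_fun do rewrite big_cons; rewrite big_cons; apply: cvgD => //.
  by apply: cvgM; apply: cvg_coord.
exact: H.
Qed.

Lemma proj_ex (R : realType) m (C : set 'rV[R]_m) (y : 'rV[R]_m) : closed C -> (exists c, C c) ->
  exists p, Proj C y p.
Proof.
move=> Ccl [c0 Cc0].
pose g x := dotv (y - x) (y - x).
have gc : continuous g.
  move=> x; rewrite /g.
  have hc : (fun z => y - z) @ x --> y - x.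
    exact: (@cvgB R _ _ (nbhs x) _ (cst y) id y x (cvg_cst y) cvg_id).
  exact: (@cvg_dotv R m _ (nbhs x) _ (fun z => y - z) (fun z => y - z) _ _ hc hc).
pose A := C `&` [set x | g x <= g c0].
have Acl : closed A.
  apply: (closedI Ccl); apply: (@preimage_closed _ _ g [set r | r <= g c0]); last exact: closed_le.
  by move=> z _; apply: gc.
have Ab : bounded_set A.
  exists (`|y| + Num.sqrt (g c0)); split; first exact: num_real.
  move=> M BM x [_ Ax]; apply: ltW; apply: le_lt_trans BM.
  have h1 : `|x| <= `|y| + `|x - y|.
    by rewrite (le_trans _ (ler_normD y (x - y))) // addrC subrK.
  apply: (le_trans h1); rewrite lerD2l distrC.
  apply: (le_trans (mxnorm_le_enorm _)); rewrite /enorm ler_sqrt //.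
  exact: dotv_ge0.
have Acp : compact A := bounded_closed_compact Ab Acl.
have [c cA cmin] := compact_EVT_min (ex_intro _ c0 (conj Cc0 (lexx _)) : A !=set0) Acp
   (continuous_subspaceT gc).
move: cA; rewrite inE => -[Cc cle].
exists c; split => // d Cd; rewrite enorm_le -/(g c) -/(g d).
have [hd|hd] := leP (g d) (g c0).
  by apply: cmin; rewrite inE.
exact: (le_trans cle (ltW hd)).
Qed.

Lemma projC_spec (R : realType) m (C : set 'rV[R]_m) (y : 'rV[R]_m) : closed C -> (exists c, C c) ->
  Proj C y (projC C y).
Proof. by move=> Ccl Cne; apply: xgetPex; exact: proj_ex. Qed.

Lemma dotv_expand (R : realType) m (a b : 'rV[R]_m) t :
  dotv (a - t *: b) (a - t *: b) = dotv a a - 2 * t * dotv a b + t ^+ 2 * dotv b b.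
Proof. rewrite !dotvBl !dotvBr !dotvZl !dotvZr (dotvC b a); ring. Qed.

Lemma proj_vi (R : realType) m (C : set 'rV[R]_m) (y p c : 'rV[R]_m) : convex_set_E C -> Proj C y p -> C c ->
  dotv (y - p) (c - p) <= 0.
Proof.
move=> Ccv [Cp pmin] Cc.
have B0 : 0 <= dotv (c - p) (c - p) := dotv_ge0 _.
have key : forall t, 0 < t -> t <= 1 ->
    0 <= - (2 * t * dotv (y - p) (c - p)) + t ^+ 2 * dotv (c - p) (c - p).
  move=> t t0 t1.
  have Cq := Ccv c p t Cc Cp (ltW t0) t1.
  have := pmin _ Cq; rewrite enorm_le.
  have -> : y - (t *: c + (1 - t) *: p) = (y - p) - t *: (c - p).
    by apply/matrixP => i j; rewrite !mxE; ring.
  rewrite dotv_expand; lra.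
move: key B0; set s := dotv (y - p) (c - p); set B := dotv (c - p) (c - p) => key B0.
rewrite leNgt; apply/negP => s0.
pose t := s / (B + s).
have Bs0 : 0 < B + s by lra.
have t0 : 0 < t by rewrite divr_gt0.
have t1 : t <= 1 by rewrite ler_pdivrMr // mul1r; lra.
have tE : t * (B + s) = s by rewrite /t mulfVK // gt_eqF.
have := key t t0 t1.
nra.
Qed.

Lemma proj_NC (R : realType) m (C : set 'rV[R]_m) (y : 'rV[R]_m) r : convex_set_E C -> closed C -> (exists c, C c) ->
  0 <= r -> NC C (projC C y) (r *: (y - projC C y)).
Proof.
move=> Ccv Ccl Cne r0; have Hp := projC_spec y Ccl Cne.
split; first by case: Hp.
move=> c Cc; rewrite dotvZl; apply: mulr_ge0_le0 => //.
exact: proj_vi Hp Cc.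
Qed.

Lemma dq_cvg (R : realType) n (W : normedModType R) (F : 'rV[R]_n -> W) (x h : 'rV[R]_n) :
  differentiable F x -> (fun t : R => t^-1 *: (F (t *: h + x) - F x)) @ 0^'+ --> 'd F x h.
Proof.
move=> dF; rewrite -deriveE //.
have H : (fun t : R => t^-1 *: (F (t *: h + x) - F x)) @ 0^' --> 'D_h F x := diff_derivable dF.
apply: (cvg_trans _ H); apply: cvg_fmap2; apply: within_subset => u /= u0.
by rewrite gt_eqF.
Qed.

Lemma dotv_adj (R : realType) n m (J : 'M[R]_(n, m)) (l : 'rV[R]_m) (h : 'rV[R]_n) :
  dotv (adjJ J l) h = dotv l (h *m J).
Proof.
rewrite /dotv /adjJ; under eq_bigr do rewrite mxE big_distrl /=.
rewrite exchange_big; apply: eq_bigr => k _ /=; rewrite mxE big_distrr /=.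
by apply: eq_bigr => i _; rewrite !mxE; ring.
Qed.

Lemma distC_le (R : realType) m (C : set 'rV[R]_m) (y p : 'rV[R]_m) : closed C -> (exists c, C c) ->
  C p -> distC C y ^+ 2 <= dotv (y - p) (y - p).
Proof.
move=> Ccl Cne Cp; have [_ Hm] := projC_spec y Ccl Cne.
rewrite -enorm_sq /distC lerXn2r ?nnegrE ?enorm_ge0 //; exact: Hm.
Qed.

Lemma distC_eq (R : realType) m (C : set 'rV[R]_m) (y : 'rV[R]_m) :
  distC C y ^+ 2 = dotv (y - projC C y) (y - projC C y).
Proof. by rewrite /distC enorm_sq. Qed.

Lemma key_ineq (R : realType) m (a D : 'rV[R]_m) (d1 d0 : R) :
  d1 <= dotv (a + D) (a + D) -> d0 = dotv a a -> d1 - d0 <= 2 * dotv a D + dotv D D.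
Proof. move=> h1 ->; move: h1; rewrite !dotvDl !dotvDr (dotvC D a); lra. Qed.

Lemma key_real (R : realType) (ti r A B d1 d0 s q : R) : d1 - d0 <= 2 * s + q -> 0 < ti -> 0 < r ->
  ti * (A + r / 2 * d1 - (B + r / 2 * d0)) <= ti * (A - B) + r / 2 * (2 * (ti * s) + ti * q).
Proof.
move=> h ti0 r0; rewrite -subr_le0.
have -> : ti * (A + r / 2 * d1 - (B + r / 2 * d0)) - (ti * (A - B) + r / 2 * (2 * (ti * s) + ti * q))
   = (ti * (r / 2)) * ((d1 - d0) - (2 * s + q)) by ring.
apply: mulr_ge0_le0; last by lra.
by rewrite ltW // mulr_gt0 // divr_gt0.
Qed.

Lemma grad_le (R : realType) n m (f : 'rV[R]_n -> R) (G : 'rV[R]_n -> 'rV[R]_m) (C : set 'rV[R]_m)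
  (rho : R) (u : 'rV[R]_m) (x gf g : 'rV[R]_n) (J : 'M[R]_(n, m)) :
  closed C -> (exists c, C c) -> 0 < rho ->
  is_grad f x gf -> is_jac G x J ->
  is_grad (fun z => AugL f G C rho z u) x g ->
  forall h, dotv g h <= dotv gf h +
     dotv (adjJ J (rho *: (G x + rho^-1 *: u - projC C (G x + rho^-1 *: u)))) h.
Proof.
move=> Ccl Cne rho0 [df dfE] [dG dGE] [dF dFE] h.
set y := G x + rho^-1 *: u; set p := projC C y.
have Cp : C p by case: (projC_spec y Ccl Cne).
have cF := dq_cvg (h:=h) dF; rewrite dFE in cF.
have cf := dq_cvg (h:=h) df; rewrite dfE in cf.
have cG := dq_cvg (h:=h) dG; rewrite dGE in cG.
have cD : (fun t : R => G (t *: h + x) - G x) @ 0^'+ --> (0 : 'rV[R]_m).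
  have -> : (0 : 'rV[R]_m) = 0 *: (h *m J) by rewrite scale0r.
  have ct : (fun t : R => t) @ 0^'+ --> (0 : R) by apply: cvg_at_right_filter; exact: cvg_id.
  apply: cvg_trans (cvgZ ct cG).
  apply: near_eq_cvg; near=> t.
  have t0 : 0 < t by near: t; exact: nbhs_right_gt.
  by rewrite scalerA mulfV ?gt_eqF // scale1r.
rewrite dotv_adj dotvZl.
pose RHS t := t^-1 *: (f (t *: h + x) - f x) + rho / 2 * (2 * dotv (y - p) (t^-1 *: (G (t *: h + x) - G x))
   + dotv (t^-1 *: (G (t *: h + x) - G x)) (G (t *: h + x) - G x)).
have cR : RHS @ 0^'+ --> dotv gf h + rho / 2 * (2 * dotv (y - p) (h *m J) + dotv (h *m J) 0).
  apply: cvgD => //; apply: cvgM; first exact: cvg_cst.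
  apply: cvgD; first by apply: cvgM; [exact: cvg_cst | apply: cvg_dotv => //; exact: cvg_cst].
  exact: cvg_dotv.
have -> : dotv gf h + rho * dotv (y - p) (h *m J) =
   dotv gf h + rho / 2 * (2 * dotv (y - p) (h *m J) + dotv (h *m J) 0).
  by rewrite (dotvC (h *m J) 0) dotv0l addr0; field.
have LL := ler_cvg_to cF cR; apply: LL.
near=> t.
have t0 : 0 < t by near: t; exact: nbhs_right_gt.
rewrite /RHS /AugL.
set D := G (t *: h + x) - G x.
have e1' : y + D - p = (y - p) + D by apply/matrixP => i j; rewrite !mxE; ring.
have hy : G (t *: h + x) + rho^-1 *: u = y + D by apply/matrixP => i j; rewrite /y /D !mxE; ring.
rewrite hy.
have hb := distC_le (y + D) Ccl Cne Cp.
rewrite e1' in hb.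
have k := key_ineq hb (distC_eq C y).
rewrite dotvZr dotvZl.
have ti : 0 < t^-1 by rewrite invr_gt0.
have kk := @key_real R _ _ (f (t *: h + x)) (f x) _ _ _ _ k ti rho0.
exact: kk.
Unshelve. all: by end_near.
Qed.

Lemma grad_eq (R : realType) n m (f : 'rV[R]_n -> R) (G : 'rV[R]_n -> 'rV[R]_m) (C : set 'rV[R]_m)
  (rho : R) (u : 'rV[R]_m) (x gf g : 'rV[R]_n) (J : 'M[R]_(n, m)) :
  closed C -> (exists c, C c) -> 0 < rho ->
  is_grad f x gf -> is_jac G x J ->
  is_grad (fun z => AugL f G C rho z u) x g ->
  g = gf + adjJ J (rho *: (G x + rho^-1 *: u - projC C (G x + rho^-1 *: u))).
Proof.
move=> Ccl Cne r0 hf hG hF.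
have H := grad_le Ccl Cne r0 hf hG hF.
set k := gf + _.
have E : forall h, dotv g h = dotv k h.
  move=> h; rewrite /k dotvDl; apply/eqP; rewrite eq_le H /=.
  by have := H (- h); rewrite !dotvNr; lra.
apply/eqP; rewrite -subr_eq0; apply/eqP; apply: dotv_eq0.
by rewrite dotvBl E subrr.
Qed.

Lemma cvg_sub (T : topologicalType) (a : nat -> T) (s : nat -> nat) (l : T) :
  (forall k, (k <= s k)%N) -> a @ \oo --> l -> (fun k => a (s k)) @ \oo --> l.
Proof.
move=> hs al; apply: (cvg_comp s a _ al).
move=> P [N _ HN]; exists N => // k /= Nk; apply: HN => /=.
exact: leq_trans Nk (hs k).
Qed.

Lemma geom_to0 (R : realType) (a : nat -> R) (eta : R) (N : nat) :
  0 <= eta -> eta < 1 -> (forall n, 0 <= a n) ->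
  (forall n, (N <= n)%N -> a n.+1 <= eta * a n) -> a @ \oo --> 0.
Proof.
move=> e0 e1 a0 ha.
have key : forall i, a (i + N)%N <= eta ^+ i * a N.
  elim => [|i IH]; first by rewrite add0n expr0 mul1r.
  rewrite addSn (le_trans (ha _ (leq_addl _ _))) // exprS -mulrA.
  by rewrite ler_wpM2l.
rewrite -(cvg_shiftn N).
apply: (@squeeze_cvgr _ _ _ _ (cst 0) (fun i => eta ^+ i * a N)).
- by near=> i; rewrite /= a0 key.
- exact: cvg_cst.
- rewrite -(mul0r (a N)); apply: cvgMl; apply: cvg_expr.
  by rewrite ger0_norm.
Unshelve. all: by end_near.
Qed.

Lemma rho_dich (R : realType) (rho : nat -> R) (beta : R) : 1 < beta -> (forall k, 0 < rho k) ->
  (forall k, rho k.+1 = rho k \/ rho k.+1 = beta * rho k) ->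
  (exists K, forall k, (K <= k)%N -> rho k.+1 = rho k) \/ (rho @ \oo --> +oo).
Proof.
move=> b1 r0 hr.
case: (pselect (exists K, forall k, (K <= k)%N -> rho k.+1 = rho k)) => h; [by left|right].
have inc : forall k, rho k <= rho k.+1.
  by move=> k; case: (hr k) => ->; rewrite ?lexx // ler_peMl // ltW.
have mono : forall K d, rho K <= rho (K + d)%N.
  move=> K; elim => [|d IH]; first by rewrite addn0.
  by rewrite addnS (le_trans IH).
have big : forall i, exists K, beta ^+ i * rho 0%N <= rho K.
  elim => [|i [K HK]]; first by exists 0%N; rewrite expr0 mul1r.
  have [k [Kk hk]] : exists k, (K <= k)%N /\ rho k.+1 = beta * rho k.
    apply: contra_notP h => hn; exists K => k Kk.
    case: (hr k) => // e; exfalso; apply: hn; exists k; split => //.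
  exists k.+1; rewrite hk exprS -mulrA ler_pM2l ?(lt_trans ltr01) //.
  by rewrite (le_trans HK) // -(subnKC Kk) mono.
have bern : forall i, 1 + i%:R * (beta - 1) <= beta ^+ i.
  elim => [|i IH]; first by rewrite mul0r addr0 expr0.
  rewrite exprS -natr1.
  have h1 : beta * (1 + i%:R * (beta - 1)) <= beta * beta ^+ i.
    by rewrite ler_wpM2l // ltW // (lt_trans ltr01).
  have h2 : 0 <= i%:R * (beta - 1) ^+ 2 by rewrite mulr_ge0 // sqr_ge0.
  nra.
apply/cvgryPge => A.
have [N _ HN] := nbhs_infty_ger (A / (rho 0%N * (beta - 1))).
have := HN N (leqnn N) => /= hN.
have [K HK] := big N.
exists K => // k /= Kk.
rewrite (le_trans _ (le_trans HK _)) //; last by rewrite -(subnKC Kk) mono.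
have rb : 0 < rho 0%N * (beta - 1) by rewrite mulr_gt0 // subr_gt0.
move: hN; rewrite ler_pdivrMr // => hN.
apply: (le_trans hN).
have := bern N; have : 0 <= N%:R :> R by [].
have := r0 0%N.
move=> r00 _ hb; have h' : N%:R * (beta - 1) <= beta ^+ N by lra.
by rewrite mulrCA [leRHS]mulrC ler_pM2l.
Qed.

Lemma zbound (R : realType) m (C : set 'rV[R]_m) (Gw Gb uu : 'rV[R]_m) (r Mu : R) :
  closed C -> (exists c, C c) -> C Gb -> 0 < r -> enorm uu <= Mu ->
  `|Gw - projC C (Gw + r *: uu)| <= (1 + m%:R) * (r * Mu) + m%:R * `|Gw - Gb|.
Proof.
move=> Ccl Cne CGb r0 hM.
set y := Gw + r *: uu; set p := projC C y.
have hu : `|r *: uu| <= r * Mu.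
  rewrite normrZ gtr0_norm //; apply: ler_wpM2l; first exact: ltW.
  exact: le_trans (mxnorm_le_enorm uu) hM.
have e1 : Gw - p = - (r *: uu) + (y - p) by apply/matrixP => a b; rewrite !mxE; ring.
have h1 : `|Gw - p| <= `|r *: uu| + `|y - p| by rewrite e1 (le_trans (ler_normD _ _)) // normrN.
have h2 : `|y - p| <= enorm (y - p) := mxnorm_le_enorm _.
have h3 : enorm (y - p) <= enorm (y - Gb) by case: (projC_spec y Ccl Cne) => _; apply.
have h4 : enorm (y - Gb) <= m%:R * `|y - Gb| := enorm_le_mxnorm _.
have e2 : y - Gb = (Gw - Gb) + r *: uu by apply/matrixP => a b; rewrite !mxE; ring.
have h5 : `|y - Gb| <= `|Gw - Gb| + r * Mu.
  by rewrite e2 (le_trans (ler_normD _ _)) // lerD2l.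
have h6 : m%:R * `|y - Gb| <= m%:R * (`|Gw - Gb| + r * Mu) by rewrite ler_wpM2l.
lra.
Qed.

Unset Implicit Arguments. Set Strict Implicit. Set Printing Implicit Defensive.
Theorem mainTheorem10 (R : realType) (n m : nat)
  (f : 'rV[R]_n -> R) (gradf : 'rV[R]_n -> 'rV[R]_n)
  (G : 'rV[R]_n -> 'rV[R]_m) (JG : 'rV[R]_n -> 'M[R]_(n, m))
  (C : set 'rV[R]_m) (D : set 'rV[R]_n)
  (Hf : forall w, is_grad f w (gradf w)) (Hgradf : continuous gradf)
  (HG : forall w, is_jac G w (JG w)) (HJG : continuous JG)
  (HCne : exists y, C y) (HCcl : closed C) (HCcv : convex_set_E C)
  (HDne : exists w, D w) (HDcl : closed D)
  (rho0 beta eta : R) (U : set 'rV[R]_m)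
  (rho : nat -> R) (u : nat -> 'rV[R]_m) (w eps : nat -> 'rV[R]_n)
  (lam : nat -> 'rV[R]_m)
  (Halg : Algorithm2 f G C D rho0 beta eta U rho u w eps lam)
  (Heps : eps @ \oo --> (0 : 'rV[R]_n))
  (wb : 'rV[R]_n) (Hacc : accumulation_point w wb)
  (Hfeas : C (G wb) /\ D wb)
  (Hreg : AM_regular G JG C D wb) :
  exists l : 'rV[R]_m,
    (exists d, Nlim D wb d /\ 0 = gradf wb + adjJ (JG wb) l + d) /\
    NC C (G wb) l.
Proof.
case: Halg => [[r0p [b1 [e0 e1]]]] Dw0 [Une [Mu HMu]] rho0E Hk.
have rpos : forall k, 0 < rho k.
  elim => [|k IH]; first by rewrite rho0E.
  have [_ _ _ ->] := Hk k; case: ifP => _ //.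
  by rewrite mulr_gt0 // (lt_trans ltr01).
have hr : forall k, rho k.+1 = rho k \/ rho k.+1 = beta * rho k.
  by move=> k; have [_ _ _ ->] := Hk k; case: ifP; [left|right].
pose V k := Vrho G C (rho k) (w k.+1) (u k).
case: Hacc => phi [phiinc phicv].
have phik : forall k, (k <= phi k)%N.
  elim => [|k IH] //; exact: leq_ltn_trans IH (phiinc k).
pose j k := (phi k.+1).-1.
have jS : forall k, (j k).+1 = phi k.+1.
  by move=> k; rewrite prednK // (leq_ltn_trans (leq0n _) (phiinc k)).
have jk : forall k, (k <= j k)%N by move=> k; rewrite -ltnS jS; exact: phik.
pose ws k := w (j k).+1.
have cws : ws @ \oo --> wb.
  have := cvg_sub (a := fun k => w (phi k)) (s := fun k => k.+1) (fun k => leqnSn k) phicv.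
  by apply: cvg_trans; apply: near_eq_cvg; near=> k; rewrite /ws jS.
pose y k := G (ws k) + (rho (j k))^-1 *: u (j k).
pose p k := projC C (y k).
pose zs k := G (ws k) - p k.
pose ls k := rho (j k) *: (y k - p k).
have [gs Hgs] := choice (fun k => match Hk (j k) with And4 _ h _ _ => h end).
pose vs k := eps (j k).+1 - gradf (ws k).
have HM : forall k, Mset G JG C D (ws k) (zs k) (vs k).
  move=> k; have [hg hN] := Hgs k.
  have ge : gs k = gradf (ws k) + adjJ (JG (ws k)) (ls k).
    exact: (grad_eq HCcl HCne (rpos _) (Hf (ws k)) (HG (ws k)) hg).
  exists (ls k), (eps (j k).+1 - gs k); split; [|split].
  - have -> : G (ws k) - zs k = p k by apply/matrixP => a b; rewrite !mxE; ring.
    exact: proj_NC (ltW (rpos _)).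
  - exact: hN.
  - rewrite ge /vs; move: (adjJ _ _) => a; apply/matrixP => i i'; rewrite !mxE; ring.
have cE : (fun k => eps (j k).+1) @ \oo --> (0 : 'rV[R]_n).
  by apply: (cvg_sub (a := eps) (s := fun k => (j k).+1)) => // k; exact: leq_trans (jk k) (leqnSn _).
have cgr : (fun k => gradf (ws k)) @ \oo --> gradf wb.
  exact: (cvg_comp _ _ cws (Hgradf wb)).
have cvs : vs @ \oo --> - gradf wb.
  have := @cvgB R _ _ \oo _ (fun k => eps (j k).+1) (fun k => gradf (ws k)) 0 (gradf wb) cE cgr.
  rewrite sub0r; exact.
have czs : zs @ \oo --> (0 : 'rV[R]_m).
  apply/norm_cvg0P.
  case: (rho_dich b1 rpos hr) => [[K HK]|rinf].
  - have Vdec : forall k, (K <= k)%N -> V k.+1 <= eta * V k.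
      move=> k Kk; have [_ _ _ hre] := Hk k.+1.
      rewrite HK ?(leq_trans Kk) // in hre.
      move: hre; case: ifP => [/orP [//|h] _|_ hb]; first exact: h.
      exfalso; have := rpos k.+1; nra.
    have V0 := geom_to0 (ltW e0) e1 (fun n => enorm_ge0 _) Vdec.
    have Vj := cvg_sub (a := V) (s := j) jk V0.
    apply: (squeeze_cvgr (f := cst 0) (h := fun k => V (j k))); [|exact: cvg_cst|exact: Vj].
    near=> k; rewrite normr_ge0 /=; exact: mxnorm_le_enorm.
  - have hp : \forall k \near \oo, 0 < rho k by near=> k; exact: rpos.
    have rinv : (fun k => (rho k)^-1) @ \oo --> (0 : R).
      by apply/(gtr0_cvgV0 hp).
    have rj := cvg_sub (a := fun k => (rho k)^-1) (s := j) jk rinv.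
    have cG : (fun k => G (ws k)) @ \oo --> G wb.
      exact: (cvg_comp _ _ cws (differentiable_continuous (HG wb).1)).
    have cGn : (fun k => `|G (ws k) - G wb|) @ \oo --> (0 : R).
      apply/norm_cvg0P.
      have := @cvgB R _ _ \oo _ (fun k => G (ws k)) (cst (G wb)) (G wb) (G wb) cG (cvg_cst _).
      rewrite subrr; exact.
    apply: (squeeze_cvgr (f := cst 0)
      (h := fun k => (1 + m%:R) * ((rho (j k))^-1 * Mu) + m%:R * `|G (ws k) - G wb|)).
    + near=> k; rewrite normr_ge0 /=.
      have [Uu _ _ _] := Hk (j k).
      apply: zbound => //; [exact: Hfeas.1 | by rewrite invr_gt0 | exact: HMu].
    + exact: cvg_cst.
    + have -> : (0 : R) = (1 + m%:R) * (0 * Mu) + m%:R * 0 by rewrite mul0r !mulr0 addr0.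
      apply: cvgD; apply: cvgM; try exact: cvg_cst.
      * by apply: cvgMl.
      * exact: cGn.
have := Hreg (- gradf wb) (ex_intro _ ws (ex_intro _ zs (ex_intro _ vs (conj cws (conj czs (conj cvs HM)))))).
move=> [l [d [NCl [Nd E]]]].
exists l; split; last by rewrite subr0 in NCl.
by exists d; split => //; rewrite -addrA -E subrr.
Unshelve. all: by end_near.
Qed.
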